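(* Let $(X,\le)$ be a well-ordered set, $k>0$, let $<_1,<_2$ be upward strict orders on $X^k$, and let $U$ be a $<_1,<_2$-$\#$-decreasing function assignment for $X^k$. Then there exists a unique function $f:X^k\to X^k$ such that for every finite $A\subseteq X^k$ there is a finite $B$ with $A\subseteq B\subseteq X^k$ and $U(B)\subseteq f$ (as graphs).
   Context: A function assignment for $X^k$ assigns to each finite $A\subseteq X^k$ a function $U(A):A\to A$, identified with its graph. A strict order is a transitive irreflexive relation. For $x,y\in X^k$, $x\le_c y$ iff $x_i\le y_i$ for all $i$ (using the order $\le$ of $X$); a strict order $<$ on $X^k$ is upward iff $x\le_c y$ implies not $y<x$. $U$ is $<_1,<_2$-$\#$-decreasing iff for all finite $A\subseteq X^k$ and $x\in X^k$, either $U(A)\subseteq U(A\cup\{x\})$ or there exists $y$ with $x<_1y$ and $U(A\cup\{x\})(y)<_2U(A)(y)$. *)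

(* Defs.v *)
From mathcomp Require Import all_boot.
From Stdlib Require Import List.

Set Implicit Arguments.
Unset Strict Implicit.
Unset Printing Implicit Defensive.

Definition well_order (X : Type) (le : X -> X -> Prop) : Prop :=
  (forall x, le x x) /\
  (forall x y, le x y -> le y x -> x = y) /\
  (forall x y z, le x y -> le y z -> le x z) /\
  (forall x y, le x y \/ le y x) /\
  (forall S : X -> Prop, (exists x, S x) ->
     exists m, S m /\ forall y, S y -> le m y).

Definition tup (X : Type) (k : nat) := 'I_k -> X.

Definition le_c (X : Type) (le : X -> X -> Prop) (k : nat) (x y : tup X k) : Prop :=
  forall i : 'I_k, le (x i) (y i).

Definition strict_order (T : Type) (lt : T -> T -> Prop) : Prop :=
  (forall x y z, lt x y -> lt y z -> lt x z) /\ (forall x, ~ lt x x).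

Definition upward (X : Type) (le : X -> X -> Prop) (k : nat)
  (lt : tup X k -> tup X k -> Prop) : Prop :=
  strict_order lt /\ forall x y, le_c le x y -> ~ lt y x.

Definition finite_set (T : Type) (A : T -> Prop) : Prop :=
  exists l : list T, forall x, A x <-> In x l.

Definition add_pt (T : Type) (A : T -> Prop) (x : T) : T -> Prop :=
  fun z => A z \/ z = x.

(* A function assignment: U A is a function A -> A (only its values on A
   matter; the graph of U(A) is {(a, U A a) | a in A}). *)
Definition function_assignment (T : Type) (U : (T -> Prop) -> T -> T) : Prop :=
  forall A : T -> Prop, finite_set A -> forall a, A a -> A (U A a).

Definition sharp_decreasing (T : Type) (lt1 lt2 : T -> T -> Prop)
  (U : (T -> Prop) -> T -> T) : Prop :=
  forall A : T -> Prop, finite_set A -> forall x : T,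
    (forall a, A a -> U (add_pt A x) a = U A a)   (* U(A) ⊆ U(A ∪ {x}) *)
    \/ (exists y, A y /\ lt1 x y /\ lt2 (U (add_pt A x) y) (U A y)).

(* Main.v *)
Require Import Defs.
From mathcomp Require Import all_boot.
From Stdlib Require Import List Classical ClassicalEpsilon FunctionalExtensionality PropExtensionality Lia PeanoNat.

Lemma chain_le (Y : Type) (R : Y -> Y -> Prop) (f : nat -> Y)
  (refl : forall x, R x x) (trans : forall x y z, R x y -> R y z -> R x z) :
  (forall n, R (f n) (f (S n))) -> forall i j, (i <= j)%coq_nat -> R (f i) (f j).
Proof.
  intros H i j Hij. induction j as [|j IH].
  - assert (i = 0) by lia. subst. apply refl.
  - destruct (Nat.eq_dec i (S j)) as [->|Hne]; [apply refl|].
    apply (trans _ (f j)); [apply IH; lia| apply H].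
Qed.

Lemma mono_strict (phi : nat -> nat) : (forall n, (phi n < phi (S n))%coq_nat) ->
  forall i j, (i < j)%coq_nat -> (phi i < phi j)%coq_nat.
Proof.
  intros H i j Hij. induction j as [|j IH]; [lia|].
  destruct (Nat.eq_dec i j) as [->|Hne]; [apply H|].
  specialize (IH ltac:(lia)). specialize (H j). lia.
Qed.

Lemma sub_mono (X : Type) (le : X -> X -> Prop) (wo : well_order le) (a : nat -> X) :
  exists phi : nat -> nat, (forall n, (phi n < phi (S n))%coq_nat) /\
    forall n, le (a (phi n)) (a (phi (S n))).
Proof.
  destruct wo as [_ [_ [_ [_ wmin]]]].
  assert (least : forall N, exists n, (N <= n)%coq_nat /\ forall m, (N <= m)%coq_nat -> le (a n) (a m)).
  { intros N. destruct (wmin (fun x => exists m, (N <= m)%coq_nat /\ a m = x)) as [x [[m0 [Hm0 Hx]] Hmin]].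
    - exists (a N), N. split; auto.
    - exists m0. split; auto. intros m Hm. rewrite Hx. apply Hmin. exists m; auto. }
  set (pick := fun N => proj1_sig (constructive_indefinite_description _ (least N))).
  assert (Hpick : forall N, (N <= pick N)%coq_nat /\ forall m, (N <= m)%coq_nat -> le (a (pick N)) (a m)).
  { intros N. unfold pick. destruct (constructive_indefinite_description _ (least N)) as [n Hn]. exact Hn. }
  set (phi := fix phi n := match n with 0 => pick 0 | S n' => pick (S (phi n')) end).
  assert (Hs : forall n, (phi n < phi (S n))%coq_nat).
  { intros n. change (phi (S n)) with (pick (S (phi n))). destruct (Hpick (S (phi n))). lia. }
  exists phi. split; auto.
  intros n. destruct n as [|n].
  - change (phi 0) with (pick 0). apply (proj2 (Hpick 0)). lia.
  - change (phi (S n)) with (pick (S (phi n))). apply (proj2 (Hpick (S (phi n)))).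
    pose proof (Hs n) as H1. pose proof (Hs (S n)) as H2. lia.
Qed.

Lemma dickson_aux (X : Type) (le : X -> X -> Prop) (wo : well_order le) (k : nat) :
  forall m, (m <= k)%coq_nat -> forall s : nat -> tup X k,
  exists phi : nat -> nat, (forall n, (phi n < phi (S n))%coq_nat) /\
    forall n (c : 'I_k), (nat_of_ord c < m)%coq_nat -> le (s (phi n) c) (s (phi (S n)) c).
Proof.
  pose proof wo as [refl [_ [trans _]]].
  intros m. induction m as [|m IH]; intros Hm s.
  - exists (fun n => n). split; [intros; lia|]. intros n c Hc. lia.
  - destruct (IH ltac:(lia) s) as [phi [Hphi Hle]].
    have Hmk : m < k by apply/ltP; lia.
    set (c0 := Ordinal Hmk).
    destruct (sub_mono X le wo (fun n => s (phi n) c0)) as [psi [Hpsi Hle2]].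
    exists (fun n => phi (psi n)). split.
    + intros n. apply mono_strict; auto.
    + intros n c Hc. destruct (Nat.eq_dec (nat_of_ord c) m) as [Hcm|Hcm].
      * have -> : c = c0 by apply: val_inj; rewrite /= Hcm.
        apply Hle2.
      * apply (chain_le _ (fun x y => le (s x c) (s y c)) phi); auto.
        -- intros x y z; apply trans.
        -- intros n'. apply Hle. lia.
        -- specialize (Hpsi n). lia.
Qed.

Lemma dickson (X : Type) (le : X -> X -> Prop) (wo : well_order le) (k : nat) (s : nat -> tup X k) :
  exists i j, (i < j)%coq_nat /\ le_c le (s i) (s j).
Proof.
  destruct (dickson_aux X le wo k k ltac:(lia) s) as [phi [Hphi Hle]].
  exists (phi 0), (phi 1). split; [apply Hphi|]. intros c. apply Hle. apply/ltP. apply ltn_ord.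
Qed.

Lemma upward_wf (X : Type) (le : X -> X -> Prop) (wo : well_order le) (k : nat)
  (lt : tup X k -> tup X k -> Prop) : upward le lt -> well_founded lt.
Proof.
  intros [[tr irr] up] x. apply NNPP. intros nAx.
  assert (step : forall y, ~ Acc lt y -> exists z, lt z y /\ ~ Acc lt z).
  { intros y Hy. apply NNPP. intros Hn. apply Hy. constructor. intros z Hz.
    apply NNPP. intros Hz'. apply Hn. exists z; auto. }
  set (next := fun y => epsilon (inhabits x) (fun z => lt z y /\ ~ Acc lt z)).
  set (s := fun n => Nat.iter n next x).
  assert (Hs : forall n, ~ Acc lt (s n) /\ lt (s (S n)) (s n)).
  { intros n. induction n as [|n IH].
    - split; auto. change (s 1) with (next x). unfold next.
      apply (epsilon_spec (inhabits x) (fun z => lt z x /\ ~ Acc lt z)). apply step; auto.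
    - assert (H1 : ~ Acc lt (s (S n))).
      { destruct IH as [IH1 IH2]. change (s (S n)) with (next (s n)). unfold next.
        apply (epsilon_spec (inhabits x) (fun z => lt z (s n) /\ ~ Acc lt z)). apply step; auto. }
      split; auto. change (s (S (S n))) with (next (s (S n))). unfold next.
      apply (epsilon_spec (inhabits x) (fun z => lt z (s (S n)) /\ ~ Acc lt z)). apply step; auto. }
  assert (Hdesc : forall i j, (i < j)%coq_nat -> lt (s j) (s i)).
  { intros i j Hij. induction j as [|j IH]; [lia|].
    destruct (Nat.eq_dec i j) as [->|Hne]; [apply Hs|].
    apply (tr _ (s j)); [apply Hs| apply IH; lia]. }
  destruct (dickson X le wo k s) as [i [j [Hij Hc]]].
  exact (up _ _ Hc (Hdesc i j Hij)).
Qed.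

Section Gen.
Variable T : Type.
Variables lt1 lt2 : T -> T -> Prop.
Variable U : (T -> Prop) -> T -> T.
Hypothesis tr1 : forall x y z, lt1 x y -> lt1 y z -> lt1 x z.
Hypothesis irr1 : forall x, ~ lt1 x x.
Hypothesis tr2 : forall x y z, lt2 x y -> lt2 y z -> lt2 x z.
Hypothesis irr2 : forall x, ~ lt2 x x.
Hypothesis wf1 : well_founded lt1.
Hypothesis wf2 : well_founded lt2.
Hypothesis sd : sharp_decreasing lt1 lt2 U.

Notation down p z := (z = p \/ lt1 z p).
Definition le2 (a b : T) := a = b \/ lt2 a b.

Lemma le2_trans a b c : le2 a b -> le2 b c -> le2 a c.
Proof. intros [->|H] [<-|H']; unfold le2; eauto. Qed.
Lemma le2_lt a b c : le2 a b -> lt2 b c -> lt2 a c.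
Proof. intros [->|H] H'; eauto. Qed.
Lemma lt_le2 a b c : lt2 a b -> le2 b c -> lt2 a c.
Proof. intros H [<-|H']; eauto. Qed.
Lemma le2_antisym a b : le2 a b -> le2 b a -> a = b.
Proof. intros [E|H] H2; auto. destruct H2 as [E|H']; [subst; destruct (irr2 _ H)|].
  destruct (irr2 _ (tr2 _ _ _ H H')). Qed.

Lemma U_ext (A B : T -> Prop) : (forall z, A z <-> B z) -> U A = U B.
Proof. intros H. f_equal. apply functional_extensionality. intros z.
  apply propositional_extensionality. apply H. Qed.
Lemma U_extp (A B : T -> Prop) p : (forall z, A z <-> B z) -> U A p = U B p.
Proof. intros H. now rewrite (U_ext A B H). Qed.

Lemma list_filter (l : list T) (P : T -> Prop) :
  exists l', forall z, In z l' <-> In z l /\ P z.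
Proof.
  induction l as [|a l [l' IH]].
  - exists nil. simpl. tauto.
  - destruct (classic (P a)) as [Pa|nPa].
    + exists (a :: l'). intros z. simpl. specialize (IH z).
      split; intuition (subst; auto).
    + exists l'. intros z. simpl. specialize (IH z). split; intuition (subst; auto).
      contradiction.
Qed.

Lemma fin_sub (A B : T -> Prop) : finite_set A -> (forall z, B z -> A z) -> finite_set B.
Proof. intros [l Hl] HB. destruct (list_filter l B) as [l' Hl'].
  exists l'. intros z. specialize (Hl' z). specialize (Hl z). specialize (HB z). tauto. Qed.

Lemma fin_union (A B : T -> Prop) : finite_set A -> finite_set B -> finite_set (fun z => A z \/ B z).
Proof. intros [l Hl] [m Hm]. exists (l ++ m). intros z. specialize (Hl z). specialize (Hm z).
  rewrite in_app_iff. tauto. Qed.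

Lemma fin_add (A : T -> Prop) x : finite_set A -> finite_set (add_pt A x).
Proof. intros [l Hl]. exists (x :: l). intros z. unfold add_pt. simpl. specialize (Hl z).
  intuition (subst; auto). Qed.

Lemma fin_empty : finite_set (fun _ : T => False).
Proof. exists nil. simpl. tauto. Qed.

Lemma fin_single (x : T) : finite_set (fun z => z = x).
Proof. exists (x :: nil). simpl. intros z. split; [intros ->|intros [->|[]]]; auto. Qed.

Lemma list_remove (l : list T) x : In x l ->
  exists l', (length l' < length l)%coq_nat /\ forall z, In z l' <-> In z l /\ z <> x.
Proof.
  induction l as [|a l IH]; simpl; [tauto|]. intros Hx.
  destruct (classic (a = x)) as [E|NE].
  - subst a. destruct (classic (In x l)) as [Hin|Hnin].
    + destruct (IH Hin) as [l' [Hlen Hl']]. exists l'. split; [lia|].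
      intros z. specialize (Hl' z). intuition (subst; auto).
    + exists l. split; [lia|]. intros z. split.
      * intros H; split; auto. intros ->. contradiction.
      * intros [[<-|H] H']; tauto.
  - destruct Hx as [E|Hin]; [contradiction|].
    destruct (IH Hin) as [l' [Hlen Hl']]. exists (a :: l'). simpl. split; [lia|].
    intros z. specialize (Hl' z). intuition (subst; auto).
Qed.

Lemma list_max (R : T -> T -> Prop) (trR : forall x y z, R x y -> R y z -> R x z)
  (irrR : forall x, ~ R x x) (l : list T) :
  l <> nil -> exists m, In m l /\ forall y, In y l -> ~ R m y.
Proof.
  induction l as [|a l IH]; [tauto|]. intros _.
  destruct l as [|b l'].
  - exists a. simpl. split; auto. intros y [<-|[]]; auto.
  - destruct IH as [m [Hm Hmax]]; [discriminate|].
    destruct (classic (R m a)) as [Hma|Hma].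
    + exists a. split; [simpl; auto|]. intros y [<-|Hy]; auto.
      intros Hay. apply (Hmax y Hy). eauto.
    + exists m. split; [simpl; auto|]. intros y [<-|Hy]; auto.
Qed.

Lemma Lstar_aux n : forall (l : list T) (C : T -> Prop) p, (length l <= n)%coq_nat ->
  finite_set C -> C p -> (forall z, C z -> ~ down p z -> In z l) ->
  U C p = U (fun z => C z /\ down p z) p.
Proof.
  induction n as [|n IH]; intros l C p Hlen HC Cp Hl.
  - apply U_extp. intros z; cbv beta. split; [|tauto]. intros Cz. split; auto.
    apply NNPP. intros Hn. specialize (Hl z Cz Hn). destruct l; simpl in *; [auto|lia].
  - destruct (classic (exists z, C z /\ ~ down p z)) as [[z0 [Cz0 Hz0]]|Hno].
    2:{ apply U_extp. intros z; cbv beta. split; [|tauto]. intros Cz. split; auto.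
        apply NNPP. intros Hn. apply Hno. eauto. }
    destruct (list_filter l (fun z => C z /\ ~ down p z)) as [l2 Hl2].
    destruct (list_max lt1 tr1 irr1 l2) as [x [Hx Hmax]].
    { intros E. assert (In z0 l2) by (apply Hl2; auto). rewrite E in H. auto. }
    apply Hl2 in Hx. destruct Hx as [Hxl [Cx Hxd]].
    destruct (list_remove l x Hxl) as [l' [Hlen' Hl']].
    set (C' := fun z => C z /\ z <> x).
    assert (Cp' : C' p). { split; [auto|]. intros ->. apply Hxd. now left. }
    assert (HCe : forall z, C z <-> add_pt C' x z).
    { intros z. unfold add_pt, C'. split.
      - intros Cz. destruct (classic (z = x)); auto.
      - intros [[H1 _]| ->]; auto. }
    assert (finC' : finite_set C') by (apply (fin_sub C); [auto| intros z [H _]; auto]).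
    assert (E1 : U C p = U C' p).
    { rewrite (U_ext C (add_pt C' x) HCe).
      destruct (sd C' finC' x) as [H|[y [Cy [Hxy _]]]]; [apply H; auto|].
      exfalso. destruct (classic (down p y)) as [Hy|Hy].
      - apply Hxd. right. destruct Hy as [->|Hy]; eauto.
      - apply (Hmax y); auto. apply Hl2. destruct Cy as [Cy _]. split; auto. }
    rewrite E1. rewrite (IH l' C' p); [| lia | auto | auto |].
    + apply U_extp. intros z; cbv beta. unfold C'. split; [tauto|]. intros [Cz Dz]. repeat split; auto.
      intros ->. contradiction.
    + intros z [Cz Nz] Dz. apply Hl'. split; auto.
Qed.

Lemma Lstar (C : T -> Prop) p : finite_set C -> C p ->
  U C p = U (fun z => C z /\ down p z) p.
Proof.
  intros [l Hl] Cp. apply (Lstar_aux (length l) l); auto. exists l; auto.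
  intros z Cz _. apply Hl; auto.
Qed.

Lemma restr (C C' : T -> Prop) p : finite_set C -> (forall z, C' z -> C z) ->
  (forall z w, C z -> C' w -> lt1 z w -> C' z) -> C' p -> U C p = U C' p.
Proof.
  intros HC Hsub Hcl Cp.
  assert (HC' : finite_set C') by (apply (fin_sub C); auto).
  rewrite (Lstar C p HC (Hsub p Cp)) (Lstar C' p HC' Cp).
  apply U_extp. intros z; cbv beta. split.
  - intros [Cz [->|Hz]].
    + split; [exact Cp| now left].
    + split; [apply (Hcl z p); auto| now right].
  - intros [H1 H2]; split; auto.
Qed.

Lemma justify (D : T -> Prop) x b : finite_set D -> D b ->
  U (add_pt D x) b <> U D b ->
  exists w, D w /\ down b w /\ lt1 x w /\ lt2 (U (add_pt D x) w) (U D w).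
Proof.
  intros HD Db Hne.
  set (E := fun z => D z /\ down b z).
  assert (HE : finite_set E) by (apply (fin_sub D); [auto| intros z [H _]; auto]).
  assert (HDx : finite_set (add_pt D x)) by (apply fin_add; auto).
  destruct (classic (down b x)) as [[->|Hxb]|Hxb].
  - exfalso. apply Hne. apply U_extp. intros z; cbv beta. unfold add_pt. split.
    + intros [H| ->]; auto.
    + auto.
  - assert (Hb' : U (add_pt E x) b <> U E b).
    { assert (HL : U D b = U E b) by exact (Lstar D b HD Db).
      rewrite <- HL. intros H. apply Hne. rewrite <- H.
      assert (Hsub : forall z, add_pt E x z -> add_pt D x z).
      { intros z [[H1 H2]| ->]; [left; exact H1| right; reflexivity]. }
      assert (Hcl : forall z w, add_pt D x z -> add_pt E x w -> lt1 z w -> add_pt E x z).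
      { intros z w Hz Hw Hzw. destruct Hz as [Dz| ->]; [|right; reflexivity].
        left. split; [exact Dz|]. right.
        destruct Hw as [[Dw [->|Hw]]| ->]; eauto. }
      apply (restr (add_pt D x) (add_pt E x) b HDx Hsub Hcl).
      left. split; [exact Db| now left]. }
    destruct (sd E HE x) as [H|[w [[Dw Hw] [Hxw Hlt]]]].
    { exfalso. apply Hb'. apply H. split; [exact Db| now left]. }
    exists w. split; [exact Dw|split; [exact Hw|split; [exact Hxw|]]].
    assert (Hsub : forall z, add_pt E x z -> add_pt D x z).
    { intros z [[H1 H2]| ->]; [left; exact H1| right; reflexivity]. }
    assert (Hcl : forall z w, add_pt D x z -> add_pt E x w -> lt1 z w -> add_pt E x z).
    { intros z w' Hz Hw' Hzw. destruct Hz as [Dz| ->]; [|right; reflexivity].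
      left. split; [exact Dz|]. right.
      destruct Hw' as [[Dw' [->|Hw']]| ->]; eauto. }
    rewrite (restr (add_pt D x) (add_pt E x) w HDx Hsub Hcl (or_introl (conj Dw Hw))).
    assert (Hcl2 : forall z w', D z -> E w' -> lt1 z w' -> E z).
    { intros z w' Dz [Dw' Hw'] Hzw. split; [exact Dz|]. right.
      destruct Hw' as [->|Hw']; eauto. }
    rewrite (restr D E w HD (fun z H => proj1 H) Hcl2 (conj Dw Hw)).
    exact Hlt.
  - exfalso. apply Hne. rewrite (Lstar D b HD Db).
    rewrite (Lstar (add_pt D x) b HDx (or_introl Db)).
    apply U_extp. intros z; cbv beta. unfold add_pt. split.
    + intros [[Dz| ->] Hz]; [split; assumption| contradiction].
    + intros [Dz Hz]; split; [left; exact Dz| exact Hz].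
Qed.

Inductive Asc : list T -> Prop :=
| asc_nil : Asc nil
| asc_cons x L : Asc L -> (forall y, In y L -> ~ lt1 y x) -> Asc (x :: L).

Lemma sort_aux n : forall l : list T, (length l <= n)%coq_nat ->
  exists L, Asc L /\ forall z, In z L <-> In z l.
Proof.
  induction n as [|n IH]; intros l Hlen.
  - destruct l; simpl in Hlen; [|lia]. exists nil. split; [constructor|tauto].
  - destruct l as [|a l0].
    { exists nil. split; [constructor|tauto]. }
    destruct (list_max (fun x y => lt1 y x) (fun x y z H1 H2 => tr1 z y x H2 H1) irr1 (a :: l0))
      as [m [Hm Hmin]]; [discriminate|].
    destruct (list_remove (a :: l0) m Hm) as [l' [Hlen' Hl']].
    destruct (IH l') as [L' [HA HL']]; [simpl in *; lia|].
    exists (m :: L'). split.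
    + constructor; auto. intros y Hy. apply HL' in Hy. apply Hl' in Hy.
      apply (Hmin y). apply Hy.
    + intros z. split.
      * intros [<-|Hz]; auto. apply HL' in Hz. apply Hl' in Hz. apply Hz.
      * intros Hz. destruct (classic (z = m)) as [->|Hne]; [left; auto|].
        right. apply HL'. apply Hl'. auto.
Qed.

Lemma sort_list (l : list T) : exists L, Asc L /\ forall z, In z L <-> In z l.
Proof. apply (sort_aux (length l)). lia. Qed.

Lemma firstn_step (L : list T) t d : (t < length L)%coq_nat ->
  firstn (S t) L = firstn t L ++ (nth t L d :: nil).
Proof.
  revert t. induction L as [|a L IH]; intros t Ht; simpl in Ht; [lia|].
  destruct t as [|t]; [reflexivity|].
  simpl. f_equal. apply IH. lia.
Qed.

Lemma asc_prefix (L : list T) t d w : Asc L -> (t < length L)%coq_nat ->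
  In w (firstn t L) -> ~ lt1 (nth t L d) w.
Proof.
  intros HA. revert t. induction HA as [|x L HA IH Hx]; intros t Ht Hw; simpl in Ht; [lia|].
  destruct t as [|t]; [destruct Hw|].
  simpl in Hw |- *. destruct Hw as [<-|Hw].
  - apply Hx. apply nth_In. lia.
  - apply IH; auto. lia.
Qed.

Definition Spath (D : T -> Prop) (L : list T) (t : nat) := fun z => D z \/ In z (firstn t L).

Lemma fin_Spath D L t : finite_set D -> finite_set (Spath D L t).
Proof. intros HD. apply fin_union; auto. exists (firstn t L). tauto. Qed.

Lemma mono_core (D : T -> Prop) (L : list T) (HD : finite_set D) (HA : Asc L) (d : T) :
  forall p, D p ->
  (forall w, D w -> lt1 w p -> U (Spath D L 0) w = U (Spath D L (length L)) w) ->
  forall s t, (s <= t)%coq_nat -> (t <= length L)%coq_nat ->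
    le2 (U (Spath D L t) p) (U (Spath D L s) p).
Proof.
  intros p. induction p as [p IHp] using (well_founded_ind wf1). intros Dp Hyp.
  assert (Step : forall t, (t < length L)%coq_nat ->
            le2 (U (Spath D L (S t)) p) (U (Spath D L t) p)).
  { intros t Ht.
    destruct (classic (U (Spath D L (S t)) p = U (Spath D L t) p)) as [E|NE]; [left; exact E|].
    set (x := nth t L d).
    assert (Hx : forall z, Spath D L (S t) z <-> add_pt (Spath D L t) x z).
    { intros z. unfold Spath, add_pt. rewrite (firstn_step L t d Ht) in_app_iff. simpl.
      unfold x. split; intros H; intuition (subst; auto). }
    rewrite (U_ext _ _ Hx) in NE |- *.
    destruct (justify (Spath D L t) x p (fin_Spath D L t HD) (or_introl Dp) NE)
      as [w [Sw [Dw [Hxw Hlt]]]].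
    destruct Sw as [Dw'|Inw].
    2:{ exfalso. exact (asc_prefix L t d w HA Ht Inw Hxw). }
    destruct Dw as [->|Hwp]; [right; exact Hlt|].
    exfalso.
    assert (Hyp' : forall w', D w' -> lt1 w' w ->
       U (Spath D L 0) w' = U (Spath D L (length L)) w').
    { intros w' Dw'' Hw'. apply Hyp; eauto. }
    pose proof (IHp w Hwp Dw' Hyp' 0 t ltac:(lia) ltac:(lia)) as H1.
    pose proof (IHp w Hwp Dw' Hyp' (S t) (length L) ltac:(lia) ltac:(lia)) as H2.
    rewrite (U_ext _ _ Hx) in H2.
    pose proof (Hyp w Dw' Hwp) as H3.
    apply (irr2 (U (Spath D L (length L)) w)).
    rewrite <- H3 at 2. eapply lt_le2; [|exact H1]. eapply le2_lt; [exact H2|exact Hlt]. }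
  intros s t Hst Htn. induction t as [|t IHt].
  - assert (s = 0) by lia. subst. left; reflexivity.
  - destruct (classic (s = S t)) as [->|Hne]; [left; reflexivity|].
    eapply le2_trans; [apply Step; lia|]. apply IHt; lia.
Qed.

Lemma mono (D D' : T -> Prop) p : finite_set D -> finite_set D' ->
  (forall z, D z -> D' z) -> D p ->
  (forall w, D w -> lt1 w p -> U D w = U D' w) -> le2 (U D' p) (U D p).
Proof.
  intros HD [l Hl] Hsub Dp Hyp.
  destruct (sort_list l) as [L [HA HL]].
  assert (E0 : forall z, Spath D L 0 z <-> D z).
  { intros z. unfold Spath. simpl. tauto. }
  assert (En : forall z, Spath D L (length L) z <-> D' z).
  { intros z. unfold Spath. rewrite firstn_all. split.
    - intros [H|H]; auto. apply Hl. apply HL. exact H.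
    - intros H. right. apply HL. apply Hl. exact H. }
  pose proof (mono_core D L HD HA p p Dp) as M.
  rewrite (U_ext _ _ E0) (U_ext _ _ En) in M.
  pose proof (M Hyp 0 (length L) ltac:(lia) ltac:(lia)) as M'.
  rewrite (U_ext _ _ E0) (U_ext _ _ En) in M'. exact M'.
Qed.

Definition correct (h : T -> T) (B : T -> Prop) := forall b, B b -> h b = U B b.
Definition Local (q : T) (h : T -> T) := forall F : T -> Prop, finite_set F ->
  (forall x, F x -> down q x) -> exists B, finite_set B /\ (forall x, F x -> B x) /\
  (forall x, B x -> down q x) /\ correct h B.

Lemma down_trans q y z : down q y -> down y z -> down q z.
Proof. intros [->|H1] [->|H2]; auto. right; eauto. Qed.

Lemma restr_down (B : T -> Prop) y b : finite_set B -> B b -> down y b ->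
  U B b = U (fun z => B z /\ down y z) b.
Proof.
  intros HB Bb Hb. apply restr; auto.
  - intros z [H _]; exact H.
  - intros z w Bz [Bw Hw] Hzw. split; [exact Bz|]. right.
    destruct Hw as [->|Hw]; eauto.
Qed.

Lemma local_restr q h y : Local q h -> down q y -> Local y h.
Proof.
  intros HL Hy F HF HFy.
  destruct (HL F HF (fun x Fx => down_trans q y x Hy (HFy x Fx))) as [B [HB [HFB [HBq Hc]]]].
  exists (fun z => B z /\ down y z). split; [apply (fin_sub B); [auto| intros z [H _]; auto]|].
  split; [intros x Fx; split; auto|]. split; [intros x [_ H]; exact H|].
  intros b [Bb Hb]. rewrite <- (restr_down B y b HB Bb Hb). apply Hc; auto.
Qed.

Lemma local_ext q h h' : Local q h -> (forall z, down q z -> h z = h' z) -> Local q h'.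
Proof.
  intros HL He F HF HFq. destruct (HL F HF HFq) as [B [HB [HFB [HBq Hc]]]].
  exists B. repeat split; auto. intros b Bb. rewrite <- He; auto.
Qed.

Lemma uniq_half z ha hb : Local z ha -> Local z hb -> (forall y, lt1 y z -> ha y = hb y) ->
  le2 (hb z) (ha z).
Proof.
  intros Ha Hb Hbelow.
  destruct (Ha (fun x => x = z) (fin_single z) (fun x Hx => or_introl Hx))
    as [B1 [HB1 [HF1 [Hq1 Hc1]]]].
  destruct (Hb B1 HB1 Hq1) as [B2 [HB2 [HF2 [Hq2 Hc2]]]].
  assert (Hz1 : B1 z) by (apply HF1; reflexivity).
  pose proof (mono B1 B2 z HB1 HB2 HF2 Hz1) as M.
  rewrite <- (Hc1 z Hz1), <- (Hc2 z (HF2 z Hz1)) in M. apply M.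
  intros w Bw Hw. rewrite <- (Hc1 w Bw), <- (Hc2 w (HF2 w Bw)). apply Hbelow; auto.
Qed.

Lemma uniq z : forall h1 h2, Local z h1 -> Local z h2 -> h1 z = h2 z.
Proof.
  induction z as [z IH] using (well_founded_ind wf1). intros h1 h2 H1 H2.
  assert (Hb : forall y, lt1 y z -> h1 y = h2 y).
  { intros y Hy. apply IH; auto; eapply local_restr; eauto; right; auto. }
  apply le2_antisym.
  - apply uniq_half; auto. intros y Hy. symmetry; auto.
  - apply uniq_half; auto.
Qed.

Lemma sandwich (C B0 : T -> Prop) h p : finite_set C -> finite_set B0 ->
  (forall z, B0 z -> C z) -> correct h B0 -> B0 p -> Local p h ->
  (forall w, C w -> lt1 w p -> U C w = h w) -> U C p = h p.
Proof.
  intros HC HB0 Hsub Hc0 Bp HL Hyp.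
  set (E := fun z => C z /\ down p z).
  set (E0 := fun z => B0 z /\ down p z).
  assert (HE : finite_set E) by (apply (fin_sub C); [auto| intros z [H _]; auto]).
  assert (HE0 : finite_set E0) by (apply (fin_sub B0); [auto| intros z [H _]; auto]).
  assert (EC : forall w, E w -> U E w = U C w).
  { intros w [Cw Hw]. symmetry. exact (restr_down C p w HC Cw Hw). }
  assert (E0B : forall w, E0 w -> U E0 w = U B0 w).
  { intros w [Bw Hw]. symmetry. exact (restr_down B0 p w HB0 Bw Hw). }
  assert (Ep : E p) by (split; [auto| now left]).
  assert (E0p : E0 p) by (split; [auto| now left]).
  rewrite <- (EC p Ep).
  destruct (HL E HE (fun x Hx => proj2 Hx)) as [B [HB [HEB [HBq Hc]]]].
  apply le2_antisym.
  - pose proof (mono E0 E p HE0 HE (fun z Hz => conj (Hsub z (proj1 Hz)) (proj2 Hz)) E0p) as M.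
    rewrite (E0B p E0p) -(Hc0 p Bp) in M. apply M.
    intros w Hw Hwp. rewrite (E0B w Hw) -(Hc0 w (proj1 Hw)).
    rewrite (EC w (conj (Hsub w (proj1 Hw)) (proj2 Hw))). symmetry. apply Hyp; auto.
    apply Hsub. apply Hw.
  - pose proof (mono E B p HE HB HEB Ep) as M.
    rewrite -(Hc p (HEB p Ep)) in M. apply M.
    intros w Hw Hwp. rewrite -(Hc w (HEB w Hw)) (EC w Hw). apply Hyp; auto. apply Hw.
Qed.

Lemma union_correct h (B1 B2 : T -> Prop) : finite_set B1 -> finite_set B2 ->
  correct h B1 -> correct h B2 -> (forall p, B1 p \/ B2 p -> Local p h) ->
  correct h (fun z => B1 z \/ B2 z).
Proof.
  intros H1 H2 C1 C2 HL p. induction p as [p IH] using (well_founded_ind wf1).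
  intros Hp. symmetry. assert (HC := fin_union B1 B2 H1 H2).
  destruct Hp as [Hp|Hp].
  - apply (sandwich _ B1); auto. intros w Cw Hw. symmetry. auto.
  - apply (sandwich _ B2); auto. intros w Cw Hw. symmetry. auto.
Qed.

Lemma cover (P : T -> Prop) h : (forall p, P p -> Local p h) ->
  (forall p y, P p -> down p y -> P y) ->
  forall l, (forall x, In x l -> P x) ->
  exists B, finite_set B /\ (forall x, In x l -> B x) /\ (forall x, B x -> P x) /\ correct h B.
Proof.
  intros HL HP l. induction l as [|a l IH]; intros Hl.
  - exists (fun _ => False). split; [apply fin_empty|]. simpl. split; [tauto|].
    split; [tauto|]. intros b [].
  - destruct IH as [B [HB [HlB [HBP Hc]]]]; [intros x Hx; apply Hl; simpl; auto|].
    assert (Pa : P a) by (apply Hl; simpl; auto).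
    destruct (HL a Pa (fun x => x = a) (fin_single a) (fun x Hx => or_introl Hx))
      as [Ba [HBa [HFa [Hqa Hca]]]].
    exists (fun z => B z \/ Ba z). split; [apply fin_union; auto|].
    split; [intros x [<-|Hx]; [right; apply HFa; reflexivity| left; auto]|].
    assert (HP' : forall x, B x \/ Ba x -> P x).
    { intros x [Hx|Hx]; [auto| apply (HP a); auto]. }
    split; [exact HP'|].
    apply union_correct; auto.
Qed.

Lemma wf_min (P : T -> Prop) : (exists x, P x) -> exists m, P m /\ forall y, P y -> ~ lt2 y m.
Proof.
  intros [x Px]. apply NNPP. intros Hno. revert Px. induction x as [x IH] using (well_founded_ind wf2).
  intros Px. apply Hno. exists x. split; auto. intros y Py Hyx. exact (IH y Hyx Py).
Qed.

Definition hpick (z : T) : T -> T := epsilon (inhabits (fun x : T => x)) (Local z).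

Lemma exist_local : forall q, exists h, Local q h.
Proof.
  intros q. induction q as [q IH] using (well_founded_ind wf1).
  set (H := fun z => hpick z z).
  assert (ClA : forall y, lt1 y q -> Local y H).
  { intros y Hy. assert (Hly : Local y (hpick y)) by (unfold hpick; apply epsilon_spec; auto).
    apply (local_ext y (hpick y)); auto. intros z Hz.
    assert (Hzq : lt1 z q) by (destruct Hz as [->|Hz]; eauto).
    change (hpick y z = hpick z z).
    apply uniq; [eapply local_restr; eauto|]. unfold hpick; apply epsilon_spec; auto. }
  set (V := fun m => exists B, finite_set B /\ (forall x, B x -> lt1 x q) /\ correct H B /\
                       m = U (add_pt B q) q).
  destruct (wf_min V) as [m [[B0 [HB0 [HB0q [Hc0 Hm]]]] Hmin]].
  { exists (U (add_pt (fun _ => False) q) q). exists (fun _ => False).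
    split; [apply fin_empty|]. split; [tauto|]. split; [intros b []|reflexivity]. }
  exists (fun z => if excluded_middle_informative (z = q) then m else H z).
  intros F HF HFq.
  assert (HF' : finite_set (fun z => F z /\ z <> q)) by (apply (fin_sub F); [auto|intros z [Hz _]; auto]).
  destruct HF' as [lF HlF]. destruct HB0 as [l0 Hl0].
  destruct (cover (fun x => lt1 x q) H ClA) with (l := lF ++ l0) as [B1 [HB1 [Hin1 [HB1q Hc1]]]].
  { intros p y Hp [->|Hy]; eauto. }
  { intros x Hx. apply in_app_iff in Hx. destruct Hx as [Hx|Hx].
    - apply HlF in Hx. destruct Hx as [Fx Nx]. destruct (HFq x Fx) as [->|Hx]; [contradiction|auto].
    - apply Hl0 in Hx. auto. }
  assert (HB0' : finite_set B0) by (exists l0; auto).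
  assert (Sub01 : forall x, B0 x -> B1 x) by (intros x Hx; apply Hin1; apply in_app_iff; right; apply Hl0; auto).
  assert (RB1 : forall (B : T -> Prop) b, finite_set B -> (forall x, B x -> lt1 x q) -> B b ->
             U (add_pt B q) b = U B b).
  { intros B b HB HBq Bb. apply restr; [apply fin_add; auto| intros z Hz; left; auto| |auto].
    intros z w [Bz| ->] Bw Hzw; auto. exfalso. apply (irr1 q). eauto. }
  exists (add_pt B1 q). split; [apply fin_add; exact HB1|].
  split.
  { intros x Fx. destruct (classic (x = q)) as [->|Nx]; [right; reflexivity|].
    left. apply Hin1. apply in_app_iff. left. apply HlF. split; auto. }
  split.
  { intros x [Bx| ->]; [right; auto| left; reflexivity]. }
  intros b [Bb| ->].
  - destruct (excluded_middle_informative (b = q)) as [->|Nb].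
    { exfalso. apply (irr1 q). auto. }
    rewrite (RB1 B1 b HB1 HB1q Bb). apply Hc1; auto.
  - destruct (excluded_middle_informative (q = q)) as [e|Nq]; [|exfalso; auto].
    assert (Hmo : le2 (U (add_pt B1 q) q) (U (add_pt B0 q) q)).
    { apply mono; [apply fin_add; auto| apply fin_add; auto| | right; reflexivity|].
      - intros z [Bz| ->]; [left; auto| right; reflexivity].
      - intros w [Bw| ->] Hw; [|exfalso; apply (irr1 q); auto].
        rewrite (RB1 B0 w HB0' HB0q Bw) (RB1 B1 w HB1 HB1q (Sub01 w Bw)).
        rewrite <- (Hc0 w Bw). apply Hc1; auto. }
    rewrite <- Hm in Hmo. destruct Hmo as [E|Hlt]; [auto|].
    exfalso. refine (Hmin _ _ Hlt). exists B1. repeat split; auto.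
Qed.

Lemma gen_main : exists! f : T -> T, forall A : T -> Prop, finite_set A ->
  exists B : T -> Prop, finite_set B /\ (forall a, A a -> B a) /\ (forall b, B b -> f b = U B b).
Proof.
  set (f := fun z => hpick z z).
  assert (LocAll : forall q, Local q f).
  { intros q. assert (Hq : Local q (hpick q)) by (unfold hpick; apply epsilon_spec; apply exist_local).
    apply (local_ext q (hpick q)); auto. intros z Hz.
    change (hpick q z = hpick z z). apply uniq; [eapply local_restr; eauto|]. unfold hpick; apply epsilon_spec; apply exist_local. }
  exists f. split.
  - intros A [lA HlA].
    destruct (cover (fun _ => True) f (fun p _ => LocAll p) (fun _ _ _ _ => I) lA (fun _ _ => I))
      as [B [HB [Hin [_ Hc]]]].
    exists B. split; auto. split; auto. intros a Aa. apply Hin. apply HlA. auto.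
  - intros g Hg. apply functional_extensionality. intros z.
    apply uniq; auto.
    intros F HF HFz. destruct (Hg F HF) as [B [HB [HFB Hc]]].
    exists (fun x => B x /\ down z x). split; [apply (fin_sub B); [auto| intros x [H _]; auto]|].
    split; [intros x Fx; split; auto|]. split; [intros x [_ H]; exact H|].
    intros b [Bb Hb]. rewrite <- (restr_down B z b HB Bb Hb). apply Hc; auto.
Qed.
End Gen.

Theorem theorem4p16 (X : Type) (le : X -> X -> Prop) (k : nat)
  (lt1 lt2 : tup X k -> tup X k -> Prop)
  (U : (tup X k -> Prop) -> tup X k -> tup X k) :
  well_order le -> 0 < k ->
  upward le lt1 -> upward le lt2 ->
  function_assignment U -> sharp_decreasing lt1 lt2 U ->
  exists! f : tup X k -> tup X k,
    forall A : tup X k -> Prop, finite_set A ->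
      exists B : tup X k -> Prop,
        finite_set B /\ (forall a, A a -> B a) /\
        (forall b, B b -> f b = U B b).
Proof.
  intros wo _ up1 up2 _ sd.
  pose proof (upward_wf X le wo k lt1 up1) as wf1.
  pose proof (upward_wf X le wo k lt2 up2) as wf2.
  destruct up1 as [[tr1 irr1] _]. destruct up2 as [[tr2 irr2] _].
  exact (gen_main (tup X k) lt1 lt2 U tr1 irr1 tr2 irr2 wf1 wf2 sd).
Qed.
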